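(* Let $a<b$ be real, $U\subset[a,b]$ measurable, and $R\ge b-a$. Then for every finite-perimeter set $S\subset\mathbb{R}$, $$\mathrm{NM}_S(U)\le\operatorname{diam}\big((a,b)\cap\partial_{\mathcal H^1}S\big)\le\widehat\omega_{S,R}\big((a,b)\big),$$ with the convention $\operatorname{diam}(\emptyset)=0$.
   Context: For measurable $S\subset\mathbb{R}$, $\partial_{\mathcal H^1}S$ is the set of $x$ with $0<\mathcal H^1((x-\epsilon,x+\epsilon)\cap S)<2\epsilon$ for all $\epsilon>0$; $S$ has finite perimeter if $\partial_{\mathcal H^1}S$ is finite. Then there is a unique family $\mathcal I(S)$ of disjoint closed intervals of positive length with $S\triangle\bigcup\mathcal I(S)$ null. A set $M\subset\mathbb{R}$ is monotone if it is $\emptyset$, $\mathbb{R}$, or a ray; $\mathrm{NM}_S(U)=\inf\{\mathcal H^1(U\cap(M\triangle S)):M\text{ monotone}\}$. For $R>0$, $\omega_{S,R}=\sum_{I\in\mathcal I(S),\,\mathcal H^1(I)\le R}\mathcal H^1(I)(\delta_{\min I}+\delta_{\max I})$ and $\widehat\omega_{S,R}=\frac12(\omega_{S,R}+\omega_{\mathbb{R}\setminus S,R})$. *)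

(* Defs.v *)
From HB Require Import structures.
From mathcomp Require Import all_boot all_order all_algebra.
From mathcomp Require Import all_classical all_reals all_analysis.
Set Implicit Arguments. Unset Strict Implicit. Unset Printing Implicit Defensive.
Import Order.TTheory GRing.Theory Num.Theory.
Local Open Scope classical_set_scope.
Local Open Scope ring_scope.
Local Open Scope ereal_scope.

Section Defs.
Context {R : realType}.
(* H^1 on R: the (completed) Lebesgue measure, defined on all sets via
   conversion; Lebesgue measurability = Caratheodory measurability for the
   outer measure generated by interval length. *)
Local Notation mu := (@completed_lebesgue_measure R).

Definition lebesgue_measurable (A : set R) : Prop :=
  @measurable _ (caratheodory_type ((wlength (R:=R) idfun)^*)%mu) A.

Definition mbdry (S : set R) : set R :=
  [set x | forall eps : R, (0 < eps)%R ->
     0 < mu (`](x - eps)%R, (x + eps)%R[ `&` S) /\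
     mu (`](x - eps)%R, (x + eps)%R[ `&` S) < (2 * eps)%:E].

Definition finite_perimeter (S : set R) : Prop := finite_set (mbdry S).

Definition closed_pos_itv (I : set R) : Prop :=
  exists l u : \bar R, l < u /\ I = [set x : R | l <= x%:E <= u].

Definition is_itv_family (S : set R) (F : set (set R)) : Prop :=
  [/\ (forall I, F I -> closed_pos_itv I),
      (forall I J, F I -> F J -> I <> J -> I `&` J = set0) &
      mu.-negligible ((S `\` \bigcup_(I in F) I) `|` ((\bigcup_(I in F) I) `\` S))].

(* I(S): the unique such family (chosen by description) *)
Definition itv_family (S : set R) : set (set R) :=
  xget set0 [set F | is_itv_family S F].

(* min I and max I (used only for bounded I, where inf/sup are attained) *)
Definition itv_min (I : set R) : R := fine (ereal_inf (EFin @` I)).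
Definition itv_max (I : set R) : R := fine (ereal_sup (EFin @` I)).

Definition omega (S : set R) (Rr : R) (A : set R) : \bar R :=
  \esum_(I in [set I | itv_family S I /\ mu I <= Rr%:E])
     (mu I * ((\1_A (itv_min I))%:E + (\1_A (itv_max I))%:E)).

Definition omega_hat (S : set R) (Rr : R) (A : set R) : \bar R :=
  (omega S Rr A + omega (~` S) Rr A) * (2^-1)%:E.

Definition monotone (M : set R) : Prop :=
  M = set0 \/ M = setT \/
  exists c : R, M = [set` `[c, +oo[%R] \/ M = [set` `]c, +oo[%R] \/
    M = [set` `]-oo, c]%R] \/ M = [set` `]-oo, c[%R].

Definition NM (S U : set R) : \bar R :=
  ereal_inf [set mu (U `&` ((M `\` S) `|` (S `\` M))) | M in monotone].

Definition diam (A : set R) : \bar R :=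
  if `[< A = set0 >] then 0
  else ereal_sup [set (`|x - y|)%:E | x in A & y in A].

End Defs.

(* Main.v *)
Require Import Defs.
From HB Require Import structures.
From mathcomp Require Import all_boot all_order all_algebra.
From mathcomp Require Import all_classical all_reals all_analysis.
From mathcomp Require finmap.
From mathcomp.algebra_tactics Require Import lra.
Import Order.TTheory GRing.Theory Num.Theory.
Local Open Scope classical_set_scope.
Local Open Scope ring_scope.

Module Aux.
Import numFieldNormedType.Exports.
Import finmap.
Set Implicit Arguments. Unset Strict Implicit. Unset Printing Implicit Defensive.
Section P1.
Context {R : realType}.
Local Notation mu := (@completed_lebesgue_measure R).
Local Open Scope ereal_scope.

Lemma muE (A : set R) : mu A = ((wlength (R:=R) idfun)^*)%mu A.
Proof. reflexivity. Qed.

Lemma mu_lebE (A : set R) : mu A = lebesgue_measure A.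
Proof. reflexivity. Qed.

Lemma mu_ge0 (A : set R) : 0 <= mu A.
Proof. by rewrite muE outer_measure_ge0. Qed.

Lemma mu_le (A B : set R) : A `<=` B -> mu A <= mu B.
Proof. by move=> AB; rewrite !muE; apply: le_outer_measure. Qed.

Lemma mu_U (A B : set R) : mu (A `|` B) <= mu A + mu B.
Proof. by rewrite !muE; apply: outer_measureU2. Qed.

Lemma mu_sigma (F : (set R)^nat) : mu (\bigcup_n F n) <= \sum_(i <oo) mu (F i).
Proof. by rewrite muE; apply: outer_measure_sigma_subadditive. Qed.

Lemma mu_itv (i : interval R) : mu [set` i] = (if ((i.1 : \bar R) < i.2)%E then (i.2 : \bar R) - i.1 else 0)%E.
Proof. exact: (@lebesgue_measure_itv R i). Qed.

Lemma mu_set1 (x : R) : mu [set x] = 0.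
Proof. exact: (@lebesgue_measure_set1 R x). Qed.

Lemma mu_oo (x y : R) : (x <= y)%R -> mu `]x, y[ = (y - x)%:E.
Proof.
move=> xy; rewrite mu_itv /=; case: ifPn; rewrite ?lte_fin => h; first by rewrite EFinB.
have -> : y = x by apply/eqP; rewrite eq_le xy leNgt h.
by rewrite subrr.
Qed.

Lemma mu_cc (x y : R) : (x <= y)%R -> mu `[x, y] = (y - x)%:E.
Proof.
move=> xy; rewrite mu_itv /=; case: ifPn; rewrite ?lte_fin => h; first by rewrite EFinB.
have -> : y = x by apply/eqP; rewrite eq_le xy leNgt h.
by rewrite subrr.
Qed.

Lemma mu_split (T : set R) : lebesgue_measurable T ->
  forall X, mu X = mu (X `&` T) + mu (X `&` ~` T).
Proof. move=> mT X; exact (mT X). Qed.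

Lemma mu0_meas (A : set R) : mu A = 0 -> lebesgue_measurable A.
Proof.
move=> A0; suff H : forall X, mu X = mu (X `&` A) + mu (X `&` ~` A) by exact H.
move=> X; apply/eqP; rewrite eq_le; apply/andP; split.
  by rewrite -[X in mu X <= _](setIT X) -(setUCr A) setIUr mu_U.
have -> : mu (X `&` A) = 0.
  by apply/eqP; rewrite eq_le mu_ge0 andbT -A0; apply: mu_le => x [].
by rewrite add0e mu_le// => x [].
Qed.

Lemma mu0_negligible (A : set R) : mu A = 0 -> mu.-negligible A.
Proof. by move=> A0; exists A; split => //; apply: mu0_meas. Qed.

Lemma negligible_mu0 (A : set R) : mu.-negligible A -> mu A = 0.
Proof.
move=> [N [_ N0 AN]]; apply/eqP; rewrite eq_le mu_ge0 andbT -N0.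
exact: mu_le.
Qed.

Lemma mu0_sub (A B : set R) : A `<=` B -> mu B = 0 -> mu A = 0.
Proof. by move=> AB B0; apply/eqP; rewrite eq_le mu_ge0 andbT -B0 mu_le. Qed.

Lemma mu0_U (A B : set R) : mu A = 0 -> mu B = 0 -> mu (A `|` B) = 0.
Proof.
move=> A0 B0; apply/eqP; rewrite eq_le mu_ge0 andbT.
by rewrite (le_trans (mu_U _ _))// A0 B0 adde0.
Qed.

Lemma mu0_seq (I : eqType) (s : seq I) (F : I -> set R) :
  (forall i, i \in s -> mu (F i) = 0) -> mu (\bigcup_(i in [set` s]) F i) = 0.
Proof.
elim: s => [|i s IH] H.
  by apply: (mu0_sub (B:=set0)) => [x [j]//|]; rewrite muE outer_measure0.
apply: (mu0_sub (B:=F i `|` \bigcup_(j in [set` s]) F j)).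
  move=> x [j /=]; rewrite inE => /orP[/eqP->|js] Fx; [by left|right; by exists j].
apply: mu0_U; first by apply: H; rewrite inE eqxx.
by apply: IH => j js; apply: H; rewrite inE js orbT.
Qed.

Lemma mu0_finite (I : eqType) (X : set I) (F : I -> set R) : finite_set X ->
  (forall i, X i -> mu (F i) = 0) -> mu (\bigcup_(i in X) F i) = 0.
Proof.
move=> /finite_seqP[s ->] H; apply: mu0_seq => i si; exact: H.
Qed.

Lemma mu0_finset (X : set R) : finite_set X -> mu X = 0.
Proof.
move=> fX; apply: (mu0_sub (B:=\bigcup_(i in X) [set i])).
  by move=> x Xx; exists x.
by apply: mu0_finite => // i _; exact: mu_set1.
Qed.

End P1.

Section P2.
Context {R : realType}.
Local Notation mu := (@completed_lebesgue_measure R).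
Local Open Scope ereal_scope.

Lemma compact_null (K P : set R) : compact K ->
  (forall x, K x -> exists2 e : R, (0 < e)%R & mu (`](x - e)%R, (x + e)%R[ `&` P) = 0) ->
  mu (K `&` P) = 0.
Proof.
move=> cK H.
have {}H : forall x, exists e : R, K x -> (0 < e)%R /\ mu (`](x - e)%R, (x + e)%R[ `&` P) = 0.
  move=> x; have [Kx|nKx] := pselect (K x).
    by have [e e0 He] := H x Kx; exists e.
  by exists 1%R.
have [e He] := choice H.
move: cK; rewrite compact_cover => /(_ R K (fun x => [set` `](x - e x)%R, (x + e x)%R[])).
case.
- by move=> i _; exact: itv_open.
- move=> x Kx; exists x => //=; rewrite in_itv/= ltrBlDr ltrDl.
  by have [/= + _] := He x Kx => ->.
move=> D' D'K cov.
have sub : K `&` P `<=` \bigcup_(i in ([set` D'] : set R)) ([set` `](i - e i)%R, (i + e i)%R[] `&` P).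
  by move=> x [/cov [i Di fx] Px]; exists i.
apply: (mu0_sub sub).
apply: mu0_finite; first exact: finite_fset.
by move=> i /= /D'K /set_mem Ki; have [] := He i Ki.
Qed.

End P2.

Section P3.
Context {R : realType}.
Local Notation mu := (@completed_lebesgue_measure R).

Lemma in_oo (x e y : R) : (y \in `](x - e), (x + e)[) = (`|y - x| < e).
Proof.
rewrite in_itv /= ltr_norml; apply/andP/andP => -[h1 h2]; split; lra.
Qed.

Lemma open_balls (A : set R) :
  (forall x, A x -> exists2 e : R, 0 < e & `](x - e), (x + e)[ `<=` A) -> open A.
Proof.
move=> H; rewrite openE => x Ax; apply/nbhs_ballP.
have [e e0 He] := H x Ax; exists e => //; rewrite ball_itv.
exact: He.
Qed.

Lemma local_null (P : set R) :
  (forall x, exists2 e : R, 0 < e & mu (`](x - e), (x + e)[ `&` P) = 0%E) ->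
  mu P = 0%E.
Proof.
move=> H.
have sub : P `<=` \bigcup_n (`[(- n%:R), n%:R] `&` P).
  move=> x Px; exists (Num.truncn `|x|).+1 => //; split => //.
  rewrite /= in_itv /=; have := Num.Theory.truncnS_gt `|x|.
  move: (Num.truncn _).+1 => n; rewrite ltr_norml => /andP[h1 h2].
  apply/andP; split; lra.
apply: (mu0_sub sub); apply/eqP; rewrite eq_le mu_ge0 andbT.
rewrite (le_trans (mu_sigma _))// eseries0// => n _ _.
apply: compact_null; first exact: segment_compact.
move=> x _; exact: H.
Qed.

Definition Nl (T : set R) (x : R) :=
  exists2 e : R, 0 < e & mu (`](x - e), (x + e)[ `&` T) = 0%E.

Lemma Nl_near (T : set R) x : Nl T x ->
  exists2 d : R, 0 < d & forall y, `|y - x| < d -> Nl T y.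
Proof.
move=> [e e0 He]; exists (e / 2); first lra.
move=> y yx; exists (e / 2); first lra.
apply: mu0_sub He => z [zy Tz]; split => //.
move: yx zy; rewrite /= !in_itv /= ltr_norml => /andP[h1 h2] /andP[h3 h4].
apply/andP; split; lra.
Qed.

Lemma Nl_open (T : set R) : open [set x | Nl T x].
Proof.
apply: open_balls => x /Nl_near [d d0 H]; exists d => // y.
by rewrite /= in_oo => /H.
Qed.

Lemma mu_ball (x e : R) : 0 < e -> mu `](x - e), (x + e)[ = (2 * e)%:E.
Proof. by move=> e0; rewrite mu_oo; [congr EFin; lra|lra]. Qed.

Lemma Nl_excl (T : set R) x : Nl T x -> Nl (~` T) x -> False.
Proof.
move=> [e e0 He] [f f0 Hf].
pose d := Order.min e f.
have d0 : 0 < d by rewrite lt_min e0 f0.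
have de : d <= e by rewrite ge_min lexx.
have df : d <= f by rewrite ge_min lexx orbT.
have sub : `](x - d), (x + d)[ `<=` (`](x - e), (x + e)[ `&` T) `|` (`](x - f), (x + f)[ `&` ~` T).
  move=> y; rewrite /= !in_itv /= => /andP[h1 h2].
  have yin : forall g, d <= g -> y \in `](x - g), (x + g)[.
    by move=> g dg; rewrite in_itv /=; apply/andP; split; lra.
  have [Ty|nTy] := pselect (T y); [left|right]; split => //; exact: yin.
have := mu0_sub sub (mu0_U He Hf).
by rewrite mu_ball // => -[]; lra.
Qed.

Lemma Nl_class (T : set R) x : lebesgue_measurable T -> ~ mbdry T x ->
  Nl T x \/ Nl (~` T) x.
Proof.
move=> mT; rewrite /mbdry /= => /existsNP[e]/not_implyP[e0 /not_andP H].
have sp := mu_split mT (`](x - e), (x + e)[).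
rewrite mu_ball // in sp.
case: H => H.
  left; exists e => //; apply/eqP; rewrite eq_le mu_ge0 andbT.
  by rewrite leNgt; apply/negP.
right; exists e => //; apply/eqP; rewrite eq_le mu_ge0 andbT.
move/negP : H; rewrite -leNgt => H.
have fin : mu (`](x - e), (x + e)[ `&` T) \is a fin_num.
  rewrite ge0_fin_numE ?mu_ge0//.
  apply: (le_lt_trans (mu_le (B := `](x - e), (x + e)[) _)).
    by move=> y [].
  by rewrite mu_ball// ltry.
move: sp H fin; set a := mu (_ `&` T); set b := mu (_ `&` ~` T).
move=> sp H fin.
have b0 : (0 <= b)%E by apply: mu_ge0.
have: (a + b <= a + 0)%E by rewrite adde0 -sp.
by rewrite leeD2lE.
Qed.

End P3.

Section P4.
Context {R : realType}.
Local Notation mu := (@completed_lebesgue_measure R).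

Definition gap (l u : \bar R) : set R := [set x | (l < x%:E)%E /\ (x%:E < u)%E].

Lemma gap_nbhs l u x : gap l u x ->
  exists2 d : R, 0 < d & forall y, `|y - x| < d -> gap l u y.
Proof.
move=> [lx xu].
have [d1 d10 H1] : exists2 d1 : R, 0 < d1 & forall y, `|y - x| < d1 -> (l < y%:E)%E.
  case: l lx => [r||] //=; last by move=> _; exists 1 => // y _; exact: ltNyr.
  rewrite lte_fin => rx; exists (x - r); first lra.
  by move=> y; rewrite ltr_norml lte_fin => /andP[h1 h2]; lra.
have [d2 d20 H2] : exists2 d2 : R, 0 < d2 & forall y, `|y - x| < d2 -> (y%:E < u)%E.
  case: u xu => [r||] //=; first last.
    by move=> _; exists 1 => // y _; exact: ltry.
  rewrite lte_fin => rx; exists (r - x); first lra.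
  by move=> y; rewrite ltr_norml lte_fin => /andP[h1 h2]; lra.
exists (Order.min d1 d2); first by rewrite lt_min d10 d20.
move=> y; rewrite lt_min => /andP[y1 y2]; split; [exact: H1|exact: H2].
Qed.

Lemma gap_open l u : open (gap l u).
Proof.
apply: open_balls => x /gap_nbhs[d d0 H]; exists d => // y.
by rewrite /= in_oo => /H.
Qed.

Lemma gap_interval l u : is_interval (gap l u).
Proof.
move=> x y [lx _] [_ yu] z /andP[xz zy]; split.
  by apply: (lt_le_trans lx); rewrite lee_fin.
by apply: le_lt_trans yu; rewrite lee_fin.
Qed.

Lemma gap_allNl (T : set R) l u : lebesgue_measurable T ->
  (forall x, gap l u x -> ~ mbdry T x) ->
  (forall x, gap l u x -> Nl T x) \/ (forall x, gap l u x -> Nl (~` T) x).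
Proof.
move=> mT HB.
have [[x0 [g0 N0]]|none] := pselect (exists x, gap l u x /\ Nl T x); last first.
  right; move=> x gx; have [NT|//] := Nl_class mT (HB x gx).
  by exfalso; apply: none; exists x.
left.
have cA : connected (gap l u) by apply/connected_intervalP; exact: gap_interval.
have E : gap l u `&` [set x | Nl T x] = gap l u; last first.
  by move=> x gx; rewrite -E in gx; case: gx.
apply: cA.
- by exists x0.
- by exists [set x | Nl T x] => //; exact: Nl_open.
- exists (~` [set x | Nl (~` T) x]); first exact/open_closedC/Nl_open.
  apply/seteqP; split => x [gx Hx]; split => //=.
    by move=> N'; exact: Nl_excl Hx N'.
  by have [//|] := Nl_class mT (HB x gx).
Qed.

Lemma gap_null (T : set R) l u : (forall x, gap l u x -> Nl T x) ->
  mu (gap l u `&` T) = 0%E.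
Proof.
move=> H.
pose A n := [set x | T x /\ forall y, `|y - x| < n.+1%:R^-1 -> gap l u y].
have sub : gap l u `&` T `<=` \bigcup_n A n.
  move=> x [gx Tx]; have [d d0 Hd] := gap_nbhs gx.
  exists (Num.truncn (d^-1)) => //; split => // y yx; apply: Hd.
  apply: (lt_trans yx); rewrite invf_plt ?ltr0n ?invr_gt0//.
  exact: Num.Theory.truncnS_gt.
  by rewrite posrE ltr0n.
apply: (mu0_sub sub); apply/eqP; rewrite eq_le mu_ge0 andbT.
rewrite (le_trans (mu_sigma _))// eseries0// => n _ _.
apply: local_null => z.
have [gz|ngz] := pselect (gap l u z).
  have [e e0 He] := H z gz; exists e => //.
  by apply: mu0_sub He => y [yz [Ty _]].
exists n.+1%:R^-1; first by rewrite invr_gt0 ltr0n.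
apply: (mu0_sub (B := set0)); last by rewrite muE outer_measure0.
move=> y [yz [_ Hy]]; apply: ngz; apply: Hy.
by rewrite distrC -in_oo.
Qed.

Lemma gap_class (T : set R) l u : lebesgue_measurable T ->
  (forall x, gap l u x -> ~ mbdry T x) ->
  mu (gap l u `&` T) = 0%E \/ mu (gap l u `&` ~` T) = 0%E.
Proof.
move=> mT HB; case: (gap_allNl mT HB) => H; [left|right]; exact: gap_null.
Qed.

End P4.

Section P5.
Context {R : realType}.
Local Notation mu := (@completed_lebesgue_measure R).

Lemma seq_max (s : seq R) a : exists2 m, m \in a :: s & forall x, x \in a :: s -> x <= m.
Proof.
elim: s a => [|b s IH] a.
  by exists a; [rewrite inE|move=> x; rewrite inE => /eqP->].
have [m ms Hm] := IH b.
have [am|ma] := leP a m.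
  exists m; first by rewrite inE ms orbT.
  by move=> x; rewrite inE => /orP[/eqP->//|/Hm].
exists a; first by rewrite inE eqxx.
move=> x; rewrite inE => /orP[/eqP->//|/Hm xm]; exact/ltW/(le_lt_trans xm).
Qed.

Lemma seq_min (s : seq R) a : exists2 m, m \in a :: s & forall x, x \in a :: s -> m <= x.
Proof.
elim: s a => [|b s IH] a.
  by exists a; [rewrite inE|move=> x; rewrite inE => /eqP->].
have [m ms Hm] := IH b.
have [am|ma] := leP a m.
  exists a; first by rewrite inE eqxx.
  by move=> x; rewrite inE => /orP[/eqP->//|/Hm]; apply: le_trans.
exists m; first by rewrite inE ms orbT.
move=> x; rewrite inE => /orP[/eqP->|/Hm//]; exact/ltW.
Qed.

Lemma fin_max (A : set R) : finite_set A -> A !=set0 ->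
  exists2 m, A m & forall x, A x -> x <= m.
Proof.
move=> /finite_seqP[[|a s] ->] [x0 Ax0] //.
have [m ms Hm] := seq_max s a; exists m => // x; exact: Hm.
Qed.

Lemma fin_min (A : set R) : finite_set A -> A !=set0 ->
  exists2 m, A m & forall x, A x -> m <= x.
Proof.
move=> /finite_seqP[[|a s] ->] [x0 Ax0] //.
have [m ms Hm] := seq_min s a; exists m => // x; exact: Hm.
Qed.

Lemma split_fin (a b : \bar R) (c : R) : (0 <= a)%E -> (0 <= b)%E -> (a + b = c%:E)%E ->
  exists a' b', [/\ a = a'%:E, b = b'%:E & a' + b' = c].
Proof.
case: a => [a'||]; case: b => [b'||] //= a0 b0 E.
by exists a', b'; split => //; move: E => [].
Qed.

Lemma mbdryC_sub (S : set R) : lebesgue_measurable S -> mbdry S `<=` mbdry (~` S).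
Proof.
move=> mS x Hx e e0; have [h1 h2] := Hx e e0.
have sp := mu_split mS (`](x - e), (x + e)[); rewrite mu_ball// in sp.
have [a' [b' [Ea Eb ab]]] := split_fin (mu_ge0 _) (mu_ge0 _) (esym sp).
rewrite Eb; move: h1 h2; rewrite Ea !lte_fin => h1 h2; split; lra.
Qed.

Lemma mbdryC (S : set R) : lebesgue_measurable S -> mbdry (~` S) = mbdry S.
Proof.
move=> mS; apply/seteqP; split; last exact: mbdryC_sub.
have mC : lebesgue_measurable (~` S).
  by apply: (@measurableC _ (caratheodory_type ((wlength (R:=R) idfun)^*)%mu)).
by have := mbdryC_sub mC; rewrite setCK.
Qed.


End P5.

Section P6.
Context {R : realType}.
Local Notation mu := (@completed_lebesgue_measure R).
Local Open Scope ereal_scope.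

Definition endpt (B : set R) (l : \bar R) := l = -oo \/ l = +oo \/ exists2 r, B r & l = r%:E.

Definition isgap (B : set R) (l u : \bar R) :=
  [/\ l < u, endpt B l, endpt B u & forall x, gap l u x -> ~ B x].

Definition citv (l u : \bar R) : set R := [set x | l <= x%:E <= u].

Lemma isgap_lt B l l' u u' : isgap B l u -> isgap B l' u' -> l < l' -> u <= l'.
Proof.
move=> [lu _ _ Hg] [lu' El' _ _] ll'.
case: El' => [El'|[El'|[r Br El']]].
- by rewrite El' ltNge leNye in ll'.
- by rewrite El' ltNge leey in lu'.
rewrite leNgt; apply/negP => ul'; apply: (Hg r) => //; split; rewrite -El' //.
Qed.

Lemma isgap_eq B l u u' : isgap B l u -> isgap B l u' -> u <= u'.
Proof.
move=> [lu _ _ Hg] [lu' _ Eu' _].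
rewrite leNgt; apply/negP => u'u.
case: Eu' => [Eu|[Eu|[r Br Eu]]].
- by rewrite Eu ltNge leNye in lu'.
- by rewrite Eu ltNge leey in u'u.
by apply: (Hg r) => //; split; rewrite -Eu.
Qed.

Lemma gap_overlap B l u l' u' x : isgap B l u -> isgap B l' u' ->
  citv l u x -> citv l' u' x ->
  (l = l' /\ u = u') \/ (u = x%:E /\ l' = x%:E) \/ (u' = x%:E /\ l = x%:E).
Proof.
move=> g g' /andP[lx xu] /andP[l'x xu'].
case: (ltgtP l l') => [ll'|l'l|ll'].
- right; left; have ul' := isgap_lt g g' ll'.
  have e1 : u = x%:E by apply/eqP; rewrite eq_le xu (le_trans ul' l'x).
  by split => //; apply/eqP; rewrite eq_le l'x -e1 ul'.
- right; right; have u'l := isgap_lt g' g l'l.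
  have e1 : u' = x%:E by apply/eqP; rewrite eq_le xu' (le_trans u'l lx).
  by split => //; apply/eqP; rewrite eq_le lx -e1 u'l.
- left; split => //; subst l'; apply/eqP; rewrite eq_le.
  by rewrite (isgap_eq g g') (isgap_eq g' g).
Qed.


Lemma full_both (T : set R) l u x : l < x%:E -> x%:E < u ->
  mu (gap l x%:E `&` ~` T) = 0 -> mu (gap x%:E u `&` ~` T) = 0 -> ~ mbdry T x.
Proof.
move=> lx xu N1 N2 Hx.
have [d d0 Hd] := @gap_nbhs R l u x (conj lx xu).
have [_ h2] := Hx d d0.
have sub : `](x - d)%R, (x + d)%R[ `&` ~` T `<=`
    ((gap l x%:E `&` ~` T) `|` [set x]) `|` (gap x%:E u `&` ~` T).
  move=> y [yin nTy]; have := Hd y; rewrite -in_oo => /(_ yin) [ly yu].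
  have [yx|xy|->] := ltgtP y x.
  - by left; left; split => //; split => //; rewrite lte_fin.
  - by right; split => //; split => //; rewrite lte_fin.
  - by left; right.
have N : mu (`](x - d)%R, (x + d)%R[ `&` ~` T) = 0.
  apply: (mu0_sub sub); apply: mu0_U => //; apply: mu0_U => //; exact: mu_set1.
have := mu_U (`](x - d)%R, (x + d)%R[ `&` T) (`](x - d)%R, (x + d)%R[ `&` ~` T).
rewrite -setIUr setUCr setIT N adde0 mu_ball// => h.
by move: (lt_le_trans h2 h); rewrite ltxx.
Qed.

Lemma gap_of (B : set R) x : finite_set B -> ~ B x ->
  exists l u, isgap B l u /\ gap l u x.
Proof.
move=> fB nBx.
pose L := [set b | B b /\ (b < x)%R]; pose U := [set b | B b /\ (x < b)%R].
have [l [El Hl lx]] : exists l, [/\ endpt B l, (forall b, L b -> (b%:E <= l)) & l < x%:E].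
  have [[b0 Lb0]|L0] := pselect (L !=set0); last first.
    exists -oo; split; [by left| |exact: ltNyr].
    by move=> b Lb; exfalso; apply: L0; exists b.
  have [m [Bm mx] Hm] := fin_max (finite_setIl _ fB) (ex_intro _ b0 Lb0).
  exists m%:E; split; [by right; right; exists m| |by rewrite lte_fin].
  by move=> b Lb; rewrite lee_fin; exact: Hm.
have [u [Eu Hu xu]] : exists u, [/\ endpt B u, (forall b, U b -> (u <= b%:E)) & x%:E < u].
  have [[b0 Ub0]|U0] := pselect (U !=set0); last first.
    exists +oo; split; [by right; left| |exact: ltry].
    by move=> b Ub; exfalso; apply: U0; exists b.
  have [m [Bm mx] Hm] := fin_min (finite_setIl _ fB) (ex_intro _ b0 Ub0).
  exists m%:E; split; [by right; right; exists m| |by rewrite lte_fin].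
  by move=> b Ub; rewrite lee_fin; exact: Hm.
exists l, u; split => //; split => //; first exact: lt_trans lx xu.
move=> y [ly yu] By.
have [yx|xy|yx] := ltgtP y x.
- by have := Hl y (conj By yx); rewrite leNgt ly.
- by have := Hu y (conj By xy); rewrite leNgt yu.
- by apply: nBx; rewrite -yx.
Qed.

End P6.

Section P7.
Context {R : realType}.
Local Notation mu := (@completed_lebesgue_measure R).
Local Open Scope ereal_scope.

Definition fam (T : set R) : set (set R) :=
  [set I | exists l u, [/\ isgap (mbdry T) l u, mu (gap l u `&` ~` T) = 0 & I = citv l u]].

Lemma cond_null (A : set R) : mu [set y | A y /\ mu A = 0] = 0.
Proof.
have [A0|A0] := pselect (mu A = 0).
  by apply: (mu0_sub (B := A)) => // y [].
apply: (mu0_sub (B := set0)); last by rewrite muE outer_measure0.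
by move=> y [].
Qed.

Lemma endpt_real B (l : \bar R) x : endpt B l -> l = x%:E -> B x.
Proof. by move=> [->//|[->//|[r Br ->]]] [<-]. Qed.

Lemma endpt_finite (B : set R) : finite_set B -> finite_set (endpt B).
Proof.
move=> fB; apply: (sub_finite_set (B := [set -oo; +oo] `|` (EFin @` B))).
  move=> l [->|[->|[r Br ->]]]; [by left; left|by left; right|by right; exists r].
rewrite finite_setU; split; first exact: finite_set2.
exact: finite_image.
Qed.

Lemma fam_valid (T : set R) : lebesgue_measurable T -> finite_perimeter T ->
  is_itv_family T (fam T).
Proof.
move=> mT fT; split.
- by move=> I [l [u [[lu _ _ _] _ ->]]]; exists l, u.
- move=> I J [l [u [g N ->]]] [l' [u' [g' N' ->]]] IJ.
  apply/seteqP; split => // x [Ix Jx].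
  have [[e1 e2]|[[e1 e2]|[e1 e2]]] := gap_overlap g g' Ix Jx.
  + by apply: IJ; rewrite e1 e2.
  + have [lu _ Eu _] := g; have [lu' _ _ _] := g'.
    rewrite e1 in lu N; rewrite e2 in lu' N'.
    apply: (@full_both R T l u' x lu lu' N N').
    exact: endpt_real Eu e1.
  + have [lu El _ _] := g; have [lu' _ _ _] := g'.
    rewrite e1 in lu' N'; rewrite e2 in lu N.
    apply: (@full_both R T l' u x lu' lu N' N).
    exact: endpt_real El e2.
- set bad := (_ `|` _); apply: mu0_negligible.
  pose B := mbdry T.
  pose P := endpt B `*` endpt B.
  have fP : finite_set P by apply: finite_setX; exact: endpt_finite.
  pose Z1 := \bigcup_(p in P) [set y | (gap p.1 p.2 `&` T) y /\ mu (gap p.1 p.2 `&` T) = 0].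
  pose Z2 := \bigcup_(p in P) [set y | (gap p.1 p.2 `&` ~` T) y /\ mu (gap p.1 p.2 `&` ~` T) = 0].
  have sub : bad `<=` (B `|` Z1) `|` Z2.
    move=> x; have [Bx _|nBx] := pselect (B x); first by left; left.
    move=> [[Tx nFx]|[[I FI Ix] nTx]].
    + have [l [u [g gx]]] := gap_of fT nBx.
      have [lu El Eu _] := g.
      case: (gap_class mT (l:=l) (u:=u)) => [y gy|N|N].
      * by have [_ _ _ H] := g; exact: H.
      * by left; right; exists (l, u) => //.
      * exfalso; apply: nFx; exists (citv l u); first by exists l, u.
        by case: gx => lx xu; apply/andP; split; apply: ltW.
    + move: FI Ix => [l [u [g N ->]]] /andP[lx xu]; right.
      have [lu El Eu _] := g.
      have gx : gap l u x.
        split; rewrite lt_neqAle ?lx ?xu andbT; apply/eqP => E.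
          by apply: nBx; apply: endpt_real El E.
        by apply: nBx; apply: endpt_real Eu (esym E).
      by exists (l, u) => //.
  apply: (mu0_sub sub); apply: mu0_U; first apply: mu0_U.
  + exact: mu0_finset.
  + by apply: mu0_finite => // p _; exact: cond_null.
  + by apply: mu0_finite => // p _; exact: cond_null.
Qed.

End P7.

Section P8.
Context {R : realType}.
Local Notation mu := (@completed_lebesgue_measure R).
Local Open Scope ereal_scope.

Lemma itvfam_valid (T : set R) : lebesgue_measurable T -> finite_perimeter T ->
  is_itv_family T (itv_family T).
Proof. by move=> mT fT; apply: (@xgetI _ _ _ (fam T)); exact: fam_valid. Qed.

Lemma no_bdry_inside (T : set R) F I (l u : \bar R) r : is_itv_family T F -> F I ->
  I = [set x | l <= x%:E <= u] -> l < r%:E -> r%:E < u -> ~ mbdry T r.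
Proof.
move=> [_ _ Nn] FI EI lr ru Hr.
have [d d0 Hd] := @gap_nbhs R l u r (conj lr ru).
have [_ h2] := Hr d d0.
have N : mu (`](r - d)%R, (r + d)%R[ `&` ~` T) = 0.
  apply: (mu0_sub (B := (T `\` \bigcup_(I in F) I) `|` ((\bigcup_(I in F) I) `\` T))).
    move=> y [yin nTy]; right; split => //; exists I => //.
    have [ly yu] : gap l u y by apply: Hd; rewrite -in_oo.
    by rewrite EI /=; apply/andP; split; apply: ltW.
  exact: negligible_mu0.
have := mu_U (`](r - d)%R, (r + d)%R[ `&` T) (`](r - d)%R, (r + d)%R[ `&` ~` T).
rewrite -setIUr setUCr setIT N adde0 mu_ball// => h.
by move: (lt_le_trans h2 h); rewrite ltxx.
Qed.

Lemma itv_inside (T : set R) F I (p q x : R) : is_itv_family T F -> F I ->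
  mbdry T p -> mbdry T q -> I x -> (p <= x <= q)%R -> ~ mbdry T x ->
  exists l' u' : R, [/\ (p <= l')%R, (l' < u')%R, (u' <= q)%R & I = [set` `[l', u']]].
Proof.
move=> HF FI Bp Bq Ix /andP[px xq] nBx.
have [cI _ _] := HF; have [l [u [lu EI]]] := cI I FI.
have inside := no_bdry_inside HF FI EI.
have := Ix; rewrite EI => /andP[lx xu].
have pl : p%:E <= l.
  rewrite leNgt; apply/negP => lp.
  have [pu|up] := ltP (p%:E) u; first exact: inside pu Bp.
  apply: nBx; suff -> : x = p by [].
  apply/eqP; rewrite eq_le px andbT -lee_fin; exact: le_trans xu up.
have uq : u <= q%:E.
  rewrite leNgt; apply/negP => qu.
  have [lq|ql] := ltP l (q%:E); first exact: inside lq qu Bq.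
  apply: nBx; suff -> : x = q by [].
  apply/eqP; rewrite eq_le xq /= -lee_fin; exact: le_trans ql lx.
case: l lu EI pl lx inside => [l| |] lu EI pl lx inside; first last.
- by rewrite leeNy_eq in pl.
- by rewrite ltNge leey in lu.
case: u uq lu EI xu inside => [u| |] uq lu EI xu inside; first last.
- by rewrite ltNge leNye in lu.
- by rewrite leye_eq in uq.
move: uq lu pl; rewrite !lee_fin lte_fin => uq lu pl; exists l, u; split => //.
Qed.

Lemma ereal_inf_cc (l u : R) : (l <= u)%R -> ereal_inf (EFin @` [set` `[l, u]]) = l%:E.
Proof.
move=> lu; apply/eqP; rewrite eq_le; apply/andP; split.
  by apply: ereal_inf_lbound; exists l => //=; rewrite in_itv /= lexx lu.
by apply: le_ereal_inf_tmp => _ [y /= + <-]; rewrite in_itv /= lee_fin => /andP[].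
Qed.

Lemma ereal_sup_cc (l u : R) : (l <= u)%R -> ereal_sup (EFin @` [set` `[l, u]]) = u%:E.
Proof.
move=> lu; apply/eqP; rewrite eq_le; apply/andP; split.
  by apply: ge_ereal_sup => _ [y /= + <-]; rewrite in_itv /= lee_fin => /andP[].
by apply: ereal_sup_ubound; exists u => //=; rewrite in_itv /= lexx lu.
Qed.

Lemma itv_min_cc (l u : R) : (l <= u)%R -> itv_min [set` `[l, u]] = l.
Proof. by move=> lu; rewrite /itv_min ereal_inf_cc. Qed.

Lemma itv_max_cc (l u : R) : (l <= u)%R -> itv_max [set` `[l, u]] = u.
Proof. by move=> lu; rewrite /itv_max ereal_sup_cc. Qed.

End P8.

Section P9.
Context {R : realType}.
Local Notation mu := (@completed_lebesgue_measure R).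
Local Open Scope ereal_scope.

Lemma cs_sub (H : set (set R)) :
  (forall I, H I -> exists l u : R, (l < u)%R /\ I = [set` `[l, u]]) ->
  (forall I J, H I -> H J -> I <> J -> I `&` J = set0) ->
  mu (\bigcup_(I in H) I) <= \esum_(I in H) mu I.
Proof.
move=> Hitv Hdis.
pose rat_of (I : set R) : rat := xget 0%R [set r : rat | I (ratr r)].
have rat_ofP I : H I -> I (ratr (rat_of I)).
  move=> HI; have [l [u [lu ->]]] := Hitv I HI.
  have [r] := rat_in_itvoo lu; rewrite !in_itv /= => /andP[h1 h2].
  apply: (@xgetI _ _ [set r : rat | [set` `[l, u]] (ratr r)] r).
  by rewrite /= in_itv /= (ltW h1) (ltW h2).
pose c (I : set R) : nat := choice.pickle (rat_of I).
have c_inj I J : H I -> H J -> c I = c J -> I = J.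
  move=> HI HJ /(pcan_inj choice.pickleK_inv) E.
  apply: contrapT => IJ; have := Hdis I J HI HJ IJ.
  move/seteqP => [+ _] => /(_ (ratr (rat_of I))); apply => //; split.
    exact: rat_ofP.
  by rewrite E; exact: rat_ofP.
pose P : set nat := c @` H.
pose e (n : nat) : set R := xget set0 [set I | H I /\ c I = n].
have ecK I : H I -> e (c I) = I.
  move=> HI; have [HJ cJ] : H (e (c I)) /\ c (e (c I)) = c I.
    by apply: (@xgetI _ _ [set I0 | H I0 /\ c I0 = c I] I).
  exact: c_inj.
have einj : set_inj P e.
  move=> x1 x2 /set_mem[I HI <-] /set_mem[J HJ <-].
  by rewrite !ecK// => ->.
have eP : e @` P = H.
  apply/seteqP; split; first by move=> _ [_ [I HI <-] <-]; rewrite ecK.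
  by move=> I HI; exists (c I); [exists I|rewrite ecK].
rewrite -[in X in _ <= X]eP (esum_set_image mu e P); last 2 first.
  by move=> n _; exact: mu_ge0.
  exact: einj.
pose F n := if n \in P then e n else set0.
apply: (@le_trans _ _ (mu (\bigcup_n F n))).
  apply: mu_le => x [I HI Ix]; exists (c I) => //.
  have cP : c I \in P by apply/mem_set; exists I.
  by rewrite /F cP ecK.
apply: (le_trans (mu_sigma F)).
rewrite [X in _ <= X]eseries_mkcond; apply: lee_nneseries => [n _ _|n _]; first exact: mu_ge0.
rewrite /F; case: ifPn => _ //.
by rewrite muE outer_measure0.
Qed.

End P9.

Section P10.
Context {R : realType}.
Local Notation mu := (@completed_lebesgue_measure R).
Local Open Scope ereal_scope.

Lemma esum_sub (T : choiceType) (A B : set T) (f : T -> \bar R) : A `<=` B ->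
  (forall x, B x -> 0 <= f x) -> \esum_(i in A) f i <= \esum_(i in B) f i.
Proof.
move=> AB f0; rewrite esum_mkcond [X in _ <= X]esum_mkcond; apply: le_esum => x _.
case: ifPn => xA; first by rewrite ifT //; apply/mem_set; apply: AB; exact: set_mem.
by case: ifPn => // /set_mem /f0.
Qed.

Definition Hfam (T : set R) (p q : R) : set (set R) :=
  [set I | itv_family T I /\ exists l u : R, [/\ (p <= l)%R, (l < u)%R, (u <= q)%R & I = [set` `[l, u]]]].

Lemma omega_term_ge0 (A : set R) (I : set R) :
  0 <= mu I * ((\1_A (itv_min I))%:E + (\1_A (itv_max I))%:E).
Proof. by rewrite mule_ge0 ?mu_ge0// adde_ge0// lee_fin indic_ge0. Qed.

Lemma omega_ge0 (T : set R) (Rr : R) (A : set R) : 0 <= omega T Rr A.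
Proof. by apply: esum_ge0 => I _; exact: omega_term_ge0. Qed.

Lemma omega_ge (T : set R) (Rr a b p q : R) : (a < p)%R -> (q < b)%R -> (q - p <= Rr)%R ->
  \esum_(I in Hfam T p q) mu I + \esum_(I in Hfam T p q) mu I <= omega T Rr `]a, b[.
Proof.
move=> ap qb qpR; rewrite -esumD; [|by move=> *; exact: mu_ge0|by move=> *; exact: mu_ge0].
rewrite /omega; apply: (@le_trans _ _ (\esum_(I in Hfam T p q)
   (mu I * ((\1_[set` `]a, b[] (itv_min I))%:E + (\1_[set` `]a, b[] (itv_max I))%:E)))).
  2: apply: esum_sub.
  3: by move=> I _; exact: omega_term_ge0.
  2: move=> I [FI [l [u [pl lu uq EI]]]]; split => //.
  2: by rewrite EI mu_cc ?lee_fin; [lra|exact: ltW].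
apply: le_esum => I [FI [l [u [pl lu uq ->]]]].
rewrite itv_min_cc ?itv_max_cc ?(ltW lu)// mu_cc ?(ltW lu)//.
rewrite !indicE !mem_set /=; last 2 first.
  by rewrite in_itv /=; apply/andP; split; lra.
  by rewrite in_itv /=; apply/andP; split; lra.
by rewrite -!EFinD -EFinM lee_fin; lra.
Qed.


Lemma measC (S : set R) : lebesgue_measurable S -> lebesgue_measurable (~` S).
Proof. by move=> mS; apply: (@measurableC _ (caratheodory_type ((wlength (R:=R) idfun)^*)%mu)). Qed.

Lemma cover_pq (S : set R) (p q : R) : lebesgue_measurable S -> finite_perimeter S ->
  mbdry S p -> mbdry S q -> (p <= q)%R ->
  (q - p)%:E <= \esum_(I in Hfam S p q) mu I + \esum_(I in Hfam (~` S) p q) mu I.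
Proof.
move=> mS fS Bp Bq pq.
have mC := measC mS.
have fC : finite_perimeter (~` S) by rewrite /finite_perimeter mbdryC.
have V1 := itvfam_valid mS fS; have V2 := itvfam_valid mC fC.
have [_ D1 N1] := V1; have [_ D2 N2] := V2.
have N1' := negligible_mu0 N1; have N2' := negligible_mu0 N2.
set Z1 := (_ `|` _) in N1'; set Z2 := (_ `|` _) in N2'.
have sub : `[p, q] `<=` ((mbdry S `|` Z1) `|` Z2) `|`
   ((\bigcup_(I in Hfam S p q) I) `|` (\bigcup_(I in Hfam (~` S) p q) I)).
  move=> x /= xpq.
  have [Bx|nBx] := pselect (mbdry S x); first by left; left; left.
  have [Z1x|nZ1x] := pselect (Z1 x); first by left; left; right.
  have [Z2x|nZ2x] := pselect (Z2 x); first by left; right.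
  right; have [Sx|nSx] := pselect (S x).
    have [I FI Ix] : (\bigcup_(I in itv_family S) I) x.
      by apply: contrapT => nx; apply: nZ1x; left.
    have [l [u [pl lu uq EI]]] := itv_inside V1 FI Bp Bq Ix xpq nBx.
    by left; exists I => //; split => //; exists l, u.
  have [I FI Ix] : (\bigcup_(I in itv_family (~` S)) I) x.
    by apply: contrapT => nx; apply: nZ2x; left.
  have Bp2 : mbdry (~` S) p by rewrite mbdryC.
  have Bq2 : mbdry (~` S) q by rewrite mbdryC.
  have nBx2 : ~ mbdry (~` S) x by rewrite mbdryC.
  have [l [u [pl lu uq EI]]] := itv_inside V2 FI Bp2 Bq2 Ix xpq nBx2.
  by right; exists I => //; split => //; exists l, u.
rewrite -mu_cc//; apply: le_trans (mu_le sub) _.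
apply: le_trans (mu_U _ _) _.
have -> : mu ((mbdry S `|` Z1) `|` Z2) = 0.
  apply: mu0_U => //; apply: mu0_U => //; exact: mu0_finset.
rewrite add0e; apply: le_trans (mu_U _ _) _.
have Hi (T : set R) (F : set (set R)) : is_itv_family T F ->
    mu (\bigcup_(I in [set I | F I /\ exists l u : R, [/\ (p <= l)%R, (l < u)%R, (u <= q)%R & I = [set` `[l, u]]]]) I)
    <= \esum_(I in [set I | F I /\ exists l u : R, [/\ (p <= l)%R, (l < u)%R, (u <= q)%R & I = [set` `[l, u]]]]) mu I.
  move=> [_ D _]; apply: cs_sub.
    by move=> I [_ [l [u [_ lu _ ->]]]]; exists l, u.
  by move=> I J [FI _] [FJ _]; exact: D.
by apply: leeD; [exact: (Hi _ _ V1)|exact: (Hi _ _ V2)].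
Qed.

End P10.

Section P11.
Context {R : realType}.
Local Notation mu := (@completed_lebesgue_measure R).
Local Open Scope ereal_scope.

Lemma NM_bound (U S M : set R) (a b p q : R) : U `<=` [set` `[a, b]] ->
  (a <= p)%R -> (p <= q)%R -> (q <= b)%R ->
  mu (gap a%:E p%:E `&` ((M `\` S) `|` (S `\` M))) = 0 ->
  mu (gap q%:E b%:E `&` ((M `\` S) `|` (S `\` M))) = 0 ->
  mu (U `&` ((M `\` S) `|` (S `\` M))) <= (q - p)%:E.
Proof.
move=> Uab ap pq qb N1 N2.
set Dl := (_ `|` _) in N1 *.
have sub : U `&` Dl `<=` ((([set a] `|` [set b]) `|` (gap a%:E p%:E `&` Dl)) `|`
    (gap q%:E b%:E `&` Dl)) `|` [set` `[p, q]].
  move=> x [/Uab + Dx]; rewrite /= in_itv /= => /andP[ax xb].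
  have [xp|px] := ltP x p.
    have [xa|xa] := eqVneq x a; first by left; left; left; left.
    left; left; right; split => //; split; rewrite lte_fin //.
    by rewrite lt_neqAle ax eq_sym xa.
  have [qx|xq] := ltP q x.
    have [xb'|xb'] := eqVneq x b; first by left; left; left; right.
    left; right; split => //; split; rewrite lte_fin //.
    by rewrite lt_neqAle xb xb'.
  by right; rewrite /= in_itv /= px xq.
apply: le_trans (mu_le sub) _; apply: le_trans (mu_U _ _) _.
rewrite mu_cc// mu0_U ?add0e//; apply: mu0_U => //; apply: mu0_U; exact: mu_set1.
Qed.

Lemma delta_in (G M S : set R) : (forall x, G x -> M x) ->
  G `&` ((M `\` S) `|` (S `\` M)) `<=` G `&` ~` S.
Proof. by move=> GM x [Gx [[_ nSx]|[_ nMx]]]; split => //; exfalso; apply: nMx; exact: GM. Qed.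

Lemma delta_out (G M S : set R) : (forall x, G x -> ~ M x) ->
  G `&` ((M `\` S) `|` (S `\` M)) `<=` G `&` S.
Proof. by move=> GM x [Gx [[Mx _]|[Sx _]]]; split => //; exfalso; exact: GM Mx. Qed.

Lemma NM_le (S U M : set R) : Defs.monotone M ->
  NM S U <= mu (U `&` ((M `\` S) `|` (S `\` M))).
Proof. by move=> mM; apply: ereal_inf_lbound; exists M. Qed.

Lemma arith (x : R) (e1 e2 w1 w2 : \bar R) : 0 <= e1 -> 0 <= e2 ->
  x%:E <= e1 + e2 -> e1 + e1 <= w1 -> e2 + e2 <= w2 ->
  x%:E <= (w1 + w2) * (2^-1)%:E.
Proof.
move=> e10 e20 h h1 h2.
have h3 : x%:E + x%:E <= w1 + w2.
  apply: le_trans (leeD h1 h2).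
  apply: le_trans (leeD h h) _.
  by rewrite addeACA.
have w0 : 0 <= w1 + w2 by apply: le_trans (leeD h1 h2); rewrite !adde_ge0.
move: h3 w0; case: (w1 + w2) => [w||] //.
  rewrite -EFinD -EFinM !lee_fin => h3 _; lra.
by move=> _ _; rewrite gt0_mulye ?leey// lte_fin invr_gt0.
Qed.

End P11.

End Aux.
Import Aux.

Theorem mainTheorem16 (R : realType) (a b : R) (U : set R) (Rr : R) :
  a < b -> lebesgue_measurable U -> U `<=` `[a, b] -> b - a <= Rr ->
  forall S : set R, lebesgue_measurable S -> finite_perimeter S ->
    (NM S U <= diam (`]a, b[ `&` mbdry S))%E /\
    (diam (`]a, b[ `&` mbdry S) <= omega_hat S Rr `]a, b[)%E.
Proof.
move=> ab _ Uab bR S mS fS.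
set D := (`]a, b[ `&` mbdry S).
have fD : finite_set D by apply: finite_setIr.
have hat0 : (0 <= omega_hat S Rr `]a, b[)%E.
  by rewrite /omega_hat mule_ge0// ?adde_ge0 ?omega_ge0// lee_fin invr_ge0.
have [[x0 Dx0]|nD] := pselect (D !=set0).
  have [p Dp pmin] := fin_min fD (ex_intro _ x0 Dx0).
  have [q Dq qmax] := fin_max fD (ex_intro _ x0 Dx0).
  have pq : p <= q := qmax p Dp.
  case: Dp => /= + Bp; rewrite in_itv /= => /andP[ap pb].
  case: Dq => /= + Bq; rewrite in_itv /= => /andP[aq qb].
  have Dne : D <> set0 by move=> D0; rewrite D0 in Dx0.
  have diamE : diam D = ereal_sup [set (`|x - y|)%:E | x in D & y in D].
    by rewrite /diam asboolF.
  have qp_diam : ((q - p)%:E <= diam D)%E.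
    rewrite diamE; apply: ereal_sup_ubound; exists q; first by split => //; rewrite /= in_itv /= aq qb.
    by exists p; [split => //; rewrite /= in_itv /= ap pb|rewrite ger0_norm// subr_ge0].
  split; last first.
    apply: (@le_trans _ _ ((q - p)%:E)).
      rewrite diamE; apply: ge_ereal_sup => _ [x Dx [y Dy <-]].
      have px := pmin x Dx; have xq := qmax x Dx.
      have py := pmin y Dy; have yq := qmax y Dy.
      by rewrite lee_fin ler_norml; apply/andP; split; lra.
    have c := cover_pq mS fS Bp Bq pq.
    have qpR : q - p <= Rr by lra.
    have o1 := omega_ge S ap qb qpR.
    have o2 := omega_ge (~` S) ap qb qpR.
    apply: arith c o1 o2; apply: esum_ge0 => *; exact: mu_ge0.
  have nBl : forall x, gap a%:E p%:E x -> ~ mbdry S x.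
    move=> x [ax xp] Bx; rewrite !lte_fin in ax xp.
    have : D x by split => //; rewrite /= in_itv /= ax /=; lra.
    by move/pmin; lra.
  have nBr : forall x, gap q%:E b%:E x -> ~ mbdry S x.
    move=> x [qx xb] Bx; rewrite !lte_fin in qx xb.
    have : D x by split => //; rewrite /= in_itv /= xb andbT; lra.
    by move/qmax; lra.
  apply: le_trans qp_diam.
  have ap' := ltW ap; have qb' := ltW qb.
  case: (gap_class mS nBl) => Nl; case: (gap_class mS nBr) => Nr.
  - apply: (le_trans (NM_le _ _ (M := set0) _)); first by left.
    apply: (@NM_bound R U S set0 a b p q Uab ap' pq qb').
      by apply: (mu0_sub (delta_out _)) Nl => x _.
    by apply: (mu0_sub (delta_out _)) Nr => x _.
  - apply: (le_trans (NM_le _ _ (M := [set` `[p, +oo[%R]) _)).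
      by right; right; exists p; left.
    apply: (@NM_bound R U S _ a b p q Uab ap' pq qb').
      apply: (mu0_sub (delta_out _)) Nl => x [_ xp]; rewrite /= in_itv /= andbT.
      by rewrite lte_fin in xp; apply/negP; rewrite -ltNge.
    apply: (mu0_sub (delta_in _)) Nr => x [qx _]; rewrite /= in_itv /= andbT.
    by rewrite lte_fin in qx; lra.
  - apply: (le_trans (NM_le _ _ (M := [set` `]-oo, q]%R]) _)).
      by right; right; exists q; right; right; left.
    apply: (@NM_bound R U S _ a b p q Uab ap' pq qb').
      apply: (mu0_sub (delta_in _)) Nl => x [_ xp]; rewrite /= in_itv /=.
      by rewrite lte_fin in xp; lra.
    apply: (mu0_sub (delta_out _)) Nr => x [qx _]; rewrite /= in_itv /=.
    by rewrite lte_fin in qx; apply/negP; rewrite -ltNge.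
  - apply: (le_trans (NM_le _ _ (M := setT) _)); first by right; left.
    apply: (@NM_bound R U S setT a b p q Uab ap' pq qb').
      by apply: (mu0_sub (delta_in _)) Nl => x _.
    by apply: (mu0_sub (delta_in _)) Nr => x _.
have D0 : D = set0 by apply/seteqP; split => // x Dx; apply: nD; exists x.
have diam0 : diam D = 0%E by rewrite /diam asboolT.
rewrite diam0; split => //.
have nB : forall x, gap a%:E b%:E x -> ~ mbdry S x.
  move=> x [ax xb] Bx; have : D x.
    by split => //; rewrite /= in_itv /= -!lte_fin ax xb.
  by rewrite D0.
have gaa : forall M, (completed_lebesgue_measure (gap a%:E a%:E `&` ((M `\` S) `|` (S `\` M))) = 0)%E.
  move=> M; apply: (mu0_sub (B := set0)); last by rewrite muE outer_measure0.
  by move=> x [[h1 h2] _]; move: (lt_trans h1 h2); rewrite ltxx.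
case: (gap_class mS nB) => N.
- apply: (le_trans (NM_le _ _ (M := set0) _)); first by left.
  apply: le_trans (@NM_bound R U S set0 a b a a Uab (lexx _) (lexx _) (ltW ab) (gaa _) _) _.
    by apply: (mu0_sub (delta_out _)) N => x _.
  by rewrite subrr.
- apply: (le_trans (NM_le _ _ (M := setT) _)); first by right; left.
  apply: le_trans (@NM_bound R U S setT a b a a Uab (lexx _) (lexx _) (ltW ab) (gaa _) _) _.
    by apply: (mu0_sub (delta_in _)) N => x _.
  by rewrite subrr.
Qed.
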